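(* Let $p$ be an odd prime and let $J$ be a finite family of lattice points in $\mathbb{Z}^2$ (repetitions allowed) with $|J|=3p-2$ or $|J|=3p-1$. Then \[ 1-(p,J)+(2p,J)\equiv 0 \pmod p. \]
   Context: For a finite family $X$ of lattice points in $\mathbb{Z}^2$ (points may repeat; subsets are subfamilies, i.e. subsets of the index set) and an integer $n\ge 0$, $(n,X)$ denotes the number of $n$-element subfamilies of $X$ whose coordinatewise sum is congruent to $(0,0)$ modulo $p$. *)

(* Defs.v *)
From mathcomp Require Import all_boot all_order all_algebra.
Set Implicit Arguments. Unset Strict Implicit. Unset Printing Implicit Defensive.
Import GRing.Theory Num.Theory.
Local Open Scope ring_scope.

(* A finite family of lattice points of Z^2 (repetitions allowed) is a sequence
   of pairs of integers; subfamilies are subsets of the index set 'I_(size X). *)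

Definition fam_sum (X : seq (int * int)) (S : {set 'I_(size X)}) : int * int :=
  (\sum_(i in S) (tnth (in_tuple X) i).1, \sum_(i in S) (tnth (in_tuple X) i).2).

(* (n, X) : number of n-element subfamilies with sum = (0,0) mod p *)
Definition zsum_count (p : nat) (n : nat) (X : seq (int * int)) : nat :=
  #|[set S : {set 'I_(size X)} | (#|S| == n)%N &&
      (((fam_sum S).1 %% p%:Z)%Z == 0) && (((fam_sum S).2 %% p%:Z)%Z == 0)]|.

(* Main.v *)
Require Import Defs.
From mathcomp Require Import all_boot all_order all_algebra all_field.
From mathcomp Require Import zify ring.
Set Implicit Arguments. Unset Strict Implicit. Unset Printing Implicit Defensive.
Import GRing.Theory.
Local Open Scope ring_scope.
Section LowDeg.
Variables (R : comRingType) (m : nat).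

Inductive lowdeg : nat -> ({set 'I_m} -> R) -> Prop :=
| ld_const d c : lowdeg d (fun _ => c)
| ld_add d F G : lowdeg d F -> lowdeg d G -> lowdeg d (fun S => F S + G S)
| ld_scale d c F : lowdeg d F -> lowdeg d (fun S => c * F S)
| ld_mulL d g F : lowdeg d F -> lowdeg d.+1 (fun S => F S * \sum_(i in S) g i)
| ld_ext d F G : lowdeg d F -> (forall S, F S = G S) -> lowdeg d G.

Lemma ld_weak d F : lowdeg d F -> forall d', (d <= d')%N -> lowdeg d' F.
Proof.
elim=> {d F}.
- by move=> d c d' _; apply: ld_const.
- by move=> d F G _ IH1 _ IH2 d' h; apply: ld_add; [apply: IH1|apply: IH2].
- by move=> d c F _ IH d' h; apply: ld_scale; apply: IH.
- move=> d g F _ IH d' h; have -> : d' = d'.-1.+1 by lia.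
  by apply: ld_mulL; apply: IH; lia.
- by move=> d F G _ IH e d' h; apply: ld_ext (IH d' h) e.
Qed.

Lemma ld_mul a F b G : lowdeg a F -> lowdeg b G ->
  lowdeg (a + b) (fun S => F S * G S).
Proof.
move=> HF; elim=> {b G}.
- move=> d c; apply: ld_ext (ld_scale c (ld_weak HF (leq_addr d a))) _.
  by move=> S; rewrite mulrC.
- by move=> d G1 G2 _ IH1 _ IH2; apply: ld_ext (ld_add IH1 IH2) _ => S; rewrite mulrDr.
- by move=> d c G _ IH; apply: ld_ext (ld_scale c IH) _ => S; rewrite mulrCA.
- move=> d g G _ IH; rewrite addnS; apply: ld_ext (ld_mulL g IH) _ => S.
  by rewrite mulrA.
- by move=> d G1 G2 _ IH e; apply: ld_ext IH _ => S; rewrite e.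
Qed.

Lemma ld_pow d F n : lowdeg d F -> lowdeg (n * d) (fun S => F S ^+ n).
Proof.
move=> HF; elim: n => [|n IH].
  by apply: ld_ext (ld_const _ 1) _ => S; rewrite expr0.
rewrite mulSn; apply: ld_ext (ld_mul HF IH) _ => S; by rewrite exprS.
Qed.

Lemma alt_base (T : {set 'I_m}) : (#|T| < m)%N ->
  \sum_(S : {set 'I_m} | T \subset S) (-1) ^+ #|S| = 0 :> R.
Proof.
move=> hT.
have : (0 < #|~: T|)%N by move: (cardsC T); rewrite card_ord; lia.
case/card_gt0P => j; rewrite inE => jT.
rewrite (bigID (fun S : {set 'I_m} => j \in S)) /=.
rewrite (reindex_onto (fun S => j |: S) (fun S => S :\ j)) /=; last first.
  by move=> S /andP [_ ?]; rewrite setD1K.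
rewrite (eq_bigl (fun S : {set 'I_m} => (T \subset S) && (j \notin S))); last first.
  move=> S; case: (boolP (j \in S)) => jS /=.
  - rewrite andbF; apply/negbTE; apply/negP => /andP [_ /eqP E].
    by move: jS; rewrite -E !inE eqxx.
  - rewrite setU1K // eqxx setU11 !andbT.
    apply/idP/idP => H.
    + apply/subsetP => x xT; move: (subsetP H x xT); rewrite in_setU1.
      by case/orP => // /eqP E; move: jT; rewrite -E xT.
    + by apply: subset_trans H (subsetUr _ _).
rewrite -big_split /= big1 // => S /andP [_ jS].
by rewrite cardsU1 jS /= add1n exprS mulN1r addNr.
Qed.

Lemma ld_vanish d F : lowdeg d F -> forall T : {set 'I_m}, (#|T| + d < m)%N ->
  \sum_(S : {set 'I_m} | T \subset S) (-1) ^+ #|S| * F S = 0.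
Proof.
elim=> {d F}.
- move=> d c T h; rewrite -mulr_suml alt_base ?mul0r //; lia.
- move=> d F G _ IH1 _ IH2 T h.
  by rewrite (eq_bigr _ (fun (S : {set 'I_m}) _ => mulrDr _ _ _)) big_split /= IH1 // IH2 // addr0.
- move=> d c F _ IH T h.
  by rewrite (eq_bigr _ (fun (S : {set 'I_m}) _ => mulrCA _ _ _)) -mulr_sumr IH // mulr0.
- move=> d g F _ IH T h.
  have E : forall S : {set 'I_m}, (-1) ^+ #|S| * (F S * \sum_(i in S) g i) =
     \sum_i (if i \in S then g i * ((-1) ^+ #|S| * F S) else 0).
    move=> S; rewrite mulrA big_mkcond mulr_sumr; apply: eq_bigr => i _.
    by case: (i \in S); [ring | rewrite !mulr0].
  under eq_bigr => S _ do rewrite E.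
  rewrite exchange_big /= big1 // => i _.
  rewrite -big_mkcondr -mulr_sumr.
  rewrite (eq_bigl (fun S : {set 'I_m} => (i |: T) \subset S)); last first.
    by move=> S; rewrite subUset sub1set andbC.
  rewrite IH ?mulr0 //; rewrite cardsU1; case: (i \in T) => /=; move: h; clear; rewrite ?add0n ?add1n ?addnS; set k := #|T|; lia.
- by move=> d F G _ IH e T h; rewrite -(eq_bigr _ (fun (S : {set 'I_m}) _ => congr1 _ (e S))) IH.
Qed.

End LowDeg.
Lemma fermatF (p : nat) (a : 'F_p) : prime p -> 1 - a ^+ (p.-1) = (a == 0)%:R.
Proof.
move=> pr; have p1 := prime_gt1 pr.
case: eqP => [->|/eqP a0].
  rewrite expr0n; have -> : (p.-1 == 0)%N = false by lia.
  by rewrite subr0.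
have : a * a ^+ p.-1 = a * 1.
  rewrite -exprS prednK; last by lia.
  by rewrite mulr1 -{2}(expf_card a) card_Fp.
by move/(mulfI a0) => ->; rewrite subrr.
Qed.

Lemma sign_split (p : nat) (b1 b2 : bool) (k : nat) : prime p -> odd p -> (k < 3 * p)%N ->
  (-1) ^+ k * ((p %| k)%N && b1 && b2)%:R =
  ((k == 0)%N && b1 && b2)%:R - ((k == p)%N && b1 && b2)%:R + ((k == 2 * p)%N && b1 && b2)%:R :> 'F_p.
Proof.
move=> pr op hk; have p1 := prime_gt1 pr.
case: (boolP (p %| k)%N) => [/dvdnP [q kq]|nd].
  rewrite kq in hk *.
  have p0 : (0 < p)%N by lia.
  have q3 : (q < 3)%N by rewrite -(ltn_pmul2r p0).
  have : (q = 0 \/ q = 1 \/ q = 2)%N by lia.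
  have pne0 : (p == 0)%N = false by lia.
  have pne2 : (p == 2 * p)%N = false by lia.
  have e20 : (2 * p == 0)%N = false by lia.
  have e2p : (2 * p == p)%N = false by lia.
  have e02 : (0 == 2 * p)%N = false by lia.
  have e0p : (0 == p)%N = false by lia.
  case=> [->|[->|->]].
  - by rewrite mul0n expr0 mul1r andTb e0p e02 !andFb subr0 addr0.
  - rewrite mul1n -signr_odd op expr1 andTb eqxx andTb pne0 pne2 !andFb.
    by rewrite sub0r addr0 mulN1r.
  - rewrite -signr_odd oddM /= ?andbF expr0 mul1r e20 e2p eqxx !andFb ?andTb.
    by rewrite subr0 add0r.
have nk0 : (k == 0)%N = false by apply/negbTE; apply: contra nd => /eqP ->; rewrite dvdn0.
have nkp : (k == p)%N = false by apply/negbTE; apply: contra nd => /eqP ->.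
have nk2 : (k == 2 * p)%N = false by apply/negbTE; apply: contra nd => /eqP ->; rewrite dvdn_mull.
by rewrite nk0 nkp nk2 !andFb mulr0 subr0 addr0.
Qed.

Lemma sum_cnt (T : finType) (P : pred T) (p : nat) :
  \sum_(S : T) (P S)%:R = (#|[set S | P S]|)%:R :> 'F_p.
Proof.
rewrite -sum1_card natr_sum [RHS]big_mkcond; apply: eq_bigr => S _.
by rewrite inE; case: (P S).
Qed.

Lemma zsum_count0 (p : nat) (J : seq (int * int)) : zsum_count p 0 J = 1%N.
Proof.
rewrite /zsum_count (_ : [set _ | _] = [set set0]) ?cards1 //.
apply/setP => S; rewrite !inE cards_eq0.
case: eqP => [->|] //=.
by rewrite /fam_sum /= !big_set0 mod0z.
Qed.

Theorem corollary2 (p : nat) (J : seq (int * int)) :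
  prime p -> odd p ->
  (size J = 3 * p - 2)%N \/ (size J = 3 * p - 1)%N ->
  ((1 - (zsum_count p p J)%:Z + (zsum_count p (2 * p) J)%:Z) = 0 %[mod p%:Z])%Z.
Proof.
move=> pr op hsize.
have p3 : (2 < p)%N.
  rewrite ltn_neqAle prime_gt1 // andbT.
  by apply: (contraTneq _ op) => <-.
have hm : (3 * p.-1 < size J < 3 * p)%N by lia.
pose X i := tnth (in_tuple J) i.
pose g1 : 'I_(size J) -> 'F_p := fun i => ((X i).1)%:~R.
pose g2 : 'I_(size J) -> 'F_p := fun i => ((X i).2)%:~R.
pose g3 : 'I_(size J) -> 'F_p := fun i => 1.
have lin g : lowdeg 1 (fun S : {set 'I_(size J)} => \sum_(i in S) g i :> 'F_p).
  exact: ld_ext (ld_mulL g (ld_const _ 0 1)) (fun S => mul1r _).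
have fac g : lowdeg p.-1 (fun S : {set 'I_(size J)} => 1 - (\sum_(i in S) g i) ^+ p.-1 :> 'F_p).
  have := ld_pow p.-1 (lin g); rewrite muln1 => H.
  apply: ld_ext (ld_add (ld_const _ _ 1) (ld_scale (-1) H)) _ => S.
  by rewrite mulN1r.
have HG := ld_mul (ld_mul (fac g1) (fac g2)) (fac g3).
have V := ld_vanish HG (T := set0).
rewrite cards0 add0n in V.
have {V} V := V ltac:(lia).
have modE (z : int) : ((z %% p%:Z == 0) = (p%:Z %| z))%Z by exact: (sameP eqP dvdz_mod0P).
have intsum (S : {set 'I_(size J)}) (f : 'I_(size J) -> int) :
    \sum_(i in S) (f i)%:~R = (\sum_(i in S) f i)%:~R :> 'F_p.
  by rewrite (big_morph (fun z : int => z%:~R : 'F_p) (fun x y => intrD _ x y) (erefl _)).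
have GE (S : {set 'I_(size J)}) :
   (1 - (\sum_(i in S) g1 i) ^+ p.-1) * (1 - (\sum_(i in S) g2 i) ^+ p.-1) *
   (1 - (\sum_(i in S) g3 i) ^+ p.-1) =
   ((p %| #|S|)%N && ((fam_sum S).1 %% p%:Z == 0)%Z && ((fam_sum S).2 %% p%:Z == 0)%Z)%:R.
  rewrite !fermatF // intsum intsum sumr_const.
  rewrite -(dvdn_pcharf (pchar_Fp pr)) -!(dvdz_pcharf (pchar_Fp pr)) !modE /fam_sum /=.
  by case: (p %| #|S|)%N; case: (_ %| _)%Z; case: (_ %| _)%Z; rewrite ?mulr0 ?mul0r ?mulr1.
have {V} V : \sum_(S : {set 'I_(size J)}) (-1) ^+ #|S| *
   ((p %| #|S|)%N && ((fam_sum S).1 %% p%:Z == 0)%Z && ((fam_sum S).2 %% p%:Z == 0)%Z)%:R = 0 :> 'F_p.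
  rewrite -[RHS]V; under [RHS]eq_bigl => S do rewrite sub0set.
  by apply: eq_bigr => S _; rewrite GE.
pose c1 (S : {set 'I_(size J)}) := ((fam_sum S).1 %% p%:Z == 0)%Z.
pose c2 (S : {set 'I_(size J)}) := ((fam_sum S).2 %% p%:Z == 0)%Z.
have W : \sum_(S : {set 'I_(size J)}) (((#|S| == 0)%N && c1 S && c2 S)%:R
     - ((#|S| == p)%N && c1 S && c2 S)%:R + ((#|S| == 2 * p)%N && c1 S && c2 S)%:R) = 0 :> 'F_p.
  rewrite -[RHS]V; apply: eq_bigr => S _; rewrite sign_split //.
  apply: leq_ltn_trans (max_card _) _; rewrite card_ord; lia.
have cnt n : \sum_(S : {set 'I_(size J)}) ((#|S| == n)%N && c1 S && c2 S)%:R = (zsum_count p n J)%:R :> 'F_p.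
  exact: (sum_cnt (fun S : {set 'I_(size J)} => (#|S| == n)%N && c1 S && c2 S)).
rewrite big_split sumrB /= !cnt zsum_count0 in W.
rewrite mod0z; apply/dvdz_mod0P; rewrite (dvdz_pcharf (pchar_Fp pr)).
apply/eqP; rewrite intrD intrB -[RHS]W; congr (_ - _ + _); by rewrite ?pmulrn ?mulr1n.
Qed.
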